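(* Under the standing setup, for all $t\ge0$ and $u_0\in\mathbb R^d$, $\mathscr S(t)u_0=\sup_{\pi\in P_t}\mathcal E_\pi u_0=\sup_{\theta\in Q_t}S_\theta u_0.$
   Context: Standing setup: $d\in\mathbb N$; vectors in $\mathbb R^d$; inequalities and suprema of vectors are componentwise; reals are identified with constant vectors. A $Q$-matrix is $q\in\mathbb R^{d\times d}$ with $q_{ii}\le0$, $q_{ij}\ge0$ ($i\ne j$), $\sum_jq_{ij}=0$. Let $\mathcal P$ be a set of $Q$-matrices and $f=(f_q)_{q\in\mathcal P}\subset\mathbb R^d$ with $\sup_{q\in\mathcal P}f_q=f_{q_0}=0$ for some $q_0\in\mathcal P$, such that $\mathcal Qu:=\sup_{q\in\mathcal P}(qu+f_q)$ is finite for every $u\in\mathbb R^d$. For $q\in\mathcal P$, $t\ge0$: $S_q(t)u_0:=e^{tq}u_0+\int_0^te^{sq}f_q\,ds$. For $h\ge0$: $\mathcal E_hu_0:=\sup_{q\in\mathcal P}S_q(h)u_0$. $P$ is the set of finite subsets $\pi\subset[0,\infty)$ with $0\in\pi$; $P_t:=\{\pi\in P:\max\pi=t\}$. For $\pi=\{t_0,\dots,t_m\}$ with $0=t_0<\dots<t_m$, $m\ge1$, $\mathcal E_\pi:=\mathcal E_{t_1-t_0}\circ\cdots\circ\mathcal E_{t_m-t_{m-1}}$, and $\mathcal E_{\{0\}}:=\mathcal E_0$. The Nisio semigroup of $(\mathcal P,f)$ is $\mathscr S(t)u_0:=\sup_{\pi\in P_t}\mathcal E_\pi u_0$. For $\mathbf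 q=(q^1,\dots,q^d)\in\mathcal P^d$ and $t\ge0$, define the affine map $S_{\mathbf q}(t)\colon\mathbb R^d\to\mathbb R^d$ by $(S_{\mathbf q}(t)u_0)_i:=(S_{q^i}(t)u_0)_i$ for $i=1,\dots,d$. Let $Q_t:=\{(\mathbf q_k,h_k)_{k=1,\dots,m}\in(\mathcal P^d\times[0,t])^m : m\in\mathbb N,\ \sum_{k=1}^mh_k=t\}$, and for $\theta=(\mathbf q_k,h_k)_{k=1,\dots,m}\in Q_t$ set $S_\theta u_0:=S_{\mathbf q_1}(h_1)\circ\cdots\circ S_{\mathbf q_m}(h_m)u_0$. *)

(* Defs.v *)
From Stdlib Require Import Reals ClassicalEpsilon.
From mathcomp Require Import ssreflect ssrfun ssrbool eqtype ssrnat fintype bigop.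
Open Scope R_scope.

Definition vec (d : nat) := 'I_d -> R.
Definition mat (d : nat) := 'I_d -> 'I_d -> R.

Definition mulmv {d : nat} (q : mat d) (v : vec d) : vec d :=
  fun i => \big[Rplus/0]_(j < d) (q i j * v j).

Fixpoint matpowv {d : nat} (q : mat d) (n : nat) (v : vec d) : vec d :=
  match n with
  | O => v
  | S n' => mulmv q (matpowv q n' v)
  end.

Definition is_Qmatrix {d : nat} (q : mat d) : Prop :=
  (forall i, q i i <= 0) /\
  (forall i j, i <> j -> 0 <= q i j) /\
  (forall i, \big[Rplus/0]_(j < d) q i j = 0).

(* limit of a real sequence (chosen by epsilon; the true limit whenever it exists) *)
Definition lim_seq (u : nat -> R) : R := epsilon (inhabits 0) (fun l => Un_cv u l).

Definition expmv {d : nat} (t : R) (q : mat d) (v : vec d) : vec d :=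
  fun i => lim_seq (fun N => sum_f_R0 (fun n => t ^ n / INR (Factorial.fact n) * matpowv q n v i) N).

(* Riemann integral int_a^b g (the true one whenever g is Riemann integrable) *)
Definition Rint (g : R -> R) (a b : R) : R :=
  epsilon (inhabits 0) (fun I => exists pr : Riemann_integrable g a b, RiemannInt pr = I).

Definition Sq {d : nat} (f : mat d -> vec d) (q : mat d) (t : R) (u0 : vec d) : vec d :=
  fun i => expmv t q u0 i + Rint (fun s => expmv s q (f q) i) 0 t.

(* supremum of a set of reals (the least upper bound whenever it exists) *)
Definition supR (E : R -> Prop) : R := epsilon (inhabits 0) (is_lub E).

Definition Eh {d : nat} (P : mat d -> Prop) (f : mat d -> vec d) (h : R) (u0 : vec d) : vec d :=
  fun i => supR (fun x => exists q, P q /\ x = Sq f q h u0 i).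

(* A partition pi = {0 = t0 < t1 < ... < tm} is encoded by the list [t1; ...; tm].
   incr_from a ts t : a < t1 < ... < tm and tm = t (or ts = [] and a = t). *)
Fixpoint incr_from (a : R) (ts : list R) (t : R) : Prop :=
  match ts with
  | nil => a = t
  | cons x r => a < x /\ incr_from x r t
  end.

Definition in_Pt (t : R) (ts : list R) : Prop := incr_from 0 ts t.

Fixpoint Epi_aux {d : nat} (P : mat d -> Prop) (f : mat d -> vec d)
    (a : R) (ts : list R) (u0 : vec d) : vec d :=
  match ts with
  | nil => u0
  | cons x r => Eh P f (x - a) (Epi_aux P f x r u0)
  end.

Definition Epi {d : nat} (P : mat d -> Prop) (f : mat d -> vec d)
    (ts : list R) (u0 : vec d) : vec d :=
  match ts with
  | nil => Eh P f 0 u0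
  | _ => Epi_aux P f 0 ts u0
  end.

Definition nisio {d : nat} (P : mat d -> Prop) (f : mat d -> vec d)
    (t : R) (u0 : vec d) : vec d :=
  fun i => supR (fun x => exists ts, in_Pt t ts /\ x = Epi P f ts u0 i).

Definition Sbold {d : nat} (f : mat d -> vec d) (qs : 'I_d -> mat d) (t : R)
    (u0 : vec d) : vec d :=
  fun i => Sq f (qs i) t u0 i.

(* theta = (bold q_k, h_k)_{k=1..m} as a list; S_theta = S_{q1}(h1) o ... o S_{qm}(hm) *)
Fixpoint Stheta {d : nat} (f : mat d -> vec d) (th : list (('I_d -> mat d) * R))
    (u0 : vec d) : vec d :=
  match th with
  | nil => u0
  | cons (qs, h) r => Sbold f qs h (Stheta f r u0)
  end.

Fixpoint sum_h {d : nat} (th : list (('I_d -> mat d) * R)) : R :=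
  match th with
  | nil => 0
  | cons (_, h) r => h + sum_h r
  end.

Fixpoint all_in {d : nat} (P : mat d -> Prop) (t : R) (th : list (('I_d -> mat d) * R)) : Prop :=
  match th with
  | nil => True
  | cons (qs, h) r => (forall i, P (qs i)) /\ 0 <= h <= t /\ all_in P t r
  end.

Definition in_Qt {d : nat} (P : mat d -> Prop) (t : R) (th : list (('I_d -> mat d) * R)) : Prop :=
  th <> nil /\ all_in P t th /\ sum_h th = t.

(* Main.v *)
Require Import Defs.
From HB Require Import structures.
From Stdlib Require Import Reals ClassicalEpsilon Lra Lia FunctionalExtensionality.
From Coquelicot Require Import Coquelicot.
From mathcomp Require Import ssreflect ssrfun ssrbool eqtype ssrnat fintype bigop.
From mathcomp Require Import binomial.
Open Scope R_scope.

HB.instance Definition _ := Monoid.isComLaw.Build R 0 Rplus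
  (fun a b c => esym (Rplus_assoc a b c)) Rplus_comm Rplus_0_l.

Section Vec.
Variable d : nat.
Implicit Types (q : mat d) (u v w : vec d).

Lemma big_scal (c : R) (F : 'I_d -> R) :
  \big[Rplus/0]_(j < d) (c * F j) = c * \big[Rplus/0]_(j < d) F j.
Proof.
elim/big_rec2: _ => [|j y1 y2 _ ->]; [ring | ring].
Qed.

Lemma big_add (F G : 'I_d -> R) :
  \big[Rplus/0]_(j < d) (F j + G j) = \big[Rplus/0]_(j < d) F j + \big[Rplus/0]_(j < d) G j.
Proof. by rewrite big_split. Qed.

Lemma big_le (F G : 'I_d -> R) : (forall j, F j <= G j) ->
  \big[Rplus/0]_(j < d) F j <= \big[Rplus/0]_(j < d) G j.
Proof.
move=> H; elim/big_ind2: _ => //; [lra| move=> *; lra].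
Qed.

Lemma big_ge0 (F : 'I_d -> R) : (forall j, 0 <= F j) -> 0 <= \big[Rplus/0]_(j < d) F j.
Proof. move=> H; elim/big_ind: _ => //; [lra | move=> *; lra]. Qed.

Lemma big_abs (F : 'I_d -> R) : Rabs (\big[Rplus/0]_(j < d) F j) <= \big[Rplus/0]_(j < d) Rabs (F j).
Proof.
elim/big_rec2: _ => [|j y1 y2 _ H]; first by rewrite Rabs_R0; lra.
eapply Rle_trans; first apply Rabs_triang. lra.
Qed.

Definition nrm v := \big[Rplus/0]_(j < d) Rabs (v j).

Lemma nrm_ge0 v : 0 <= nrm v.
Proof. apply big_ge0 => j; apply Rabs_pos. Qed.

Lemma le_nrm v i : Rabs (v i) <= nrm v.
Proof.
rewrite /nrm (bigD1 i) //=.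
rewrite -{1}[Rabs (v i)]Rplus_0_r; apply Rplus_le_compat_l.
elim/big_ind: _ => //; [lra | move=> *; lra | move=> *; apply Rabs_pos].
Qed.

Definition Kn q := \big[Rplus/0]_(i < d) \big[Rplus/0]_(j < d) Rabs (q i j).

Lemma Kn_ge0 q : 0 <= Kn q.
Proof. apply big_ge0 => i; apply big_ge0 => j; apply Rabs_pos. Qed.

Lemma mulmv_abs q v i : Rabs (mulmv q v i) <= (\big[Rplus/0]_(j < d) Rabs (q i j)) * nrm v.
Proof.
rewrite /mulmv Rmult_comm -big_scal.
eapply Rle_trans; first apply big_abs.
apply big_le => j. rewrite Rabs_mult (Rmult_comm (nrm v)). apply Rmult_le_compat_l; first apply Rabs_pos.
apply le_nrm.
Qed.

Lemma nrm_mulmv q v : nrm (mulmv q v) <= Kn q * nrm v.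
Proof.
rewrite /Kn Rmult_comm -big_scal /nrm.
apply big_le => i. rewrite Rmult_comm. apply mulmv_abs.
Qed.

Lemma matpowv_bound q n v i : Rabs (matpowv q n v i) <= Kn q ^ n * nrm v.
Proof.
have H : nrm (matpowv q n v) <= Kn q ^ n * nrm v.
  elim: n => [|n IH] /=; first lra.
  eapply Rle_trans; first apply nrm_mulmv.
  rewrite Rmult_assoc. apply Rmult_le_compat_l; first apply Kn_ge0. exact IH.
eapply Rle_trans; first apply le_nrm. exact H.
Qed.

Lemma mulmv_add q u v i : mulmv q (fun j => u j + v j) i = mulmv q u i + mulmv q v i.
Proof. rewrite /mulmv -big_add; apply eq_bigr => j _; ring. Qed.

Lemma mulmv_scal q c v i : mulmv q (fun j => c * v j) i = c * mulmv q v i.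
Proof. rewrite /mulmv -big_scal; apply eq_bigr => j _; ring. Qed.

Lemma matpowv_lin q n a b u v i :
  matpowv q n (fun j => a * u j + b * v j) i = a * matpowv q n u i + b * matpowv q n v i.
Proof.
elim: n i => [|n IH] i //=.
rewrite /mulmv. rewrite (eq_bigr (fun j => a * (q i j * matpowv q n u j) + b * (q i j * matpowv q n v j))).
  by rewrite big_add !big_scal.
move=> j _; rewrite IH; ring.
Qed.

Lemma matpowv_const q n c i : is_Qmatrix q ->
  matpowv q n (fun _ => c) i = if n is O then c else 0.
Proof.
move=> [_ [_ Hs]]. elim: n i => [|n IH] i //=.
rewrite /mulmv (eq_bigr (fun j => (if n is O then c else 0) * q i j)).
  by rewrite big_scal Hs Rmult_0_r.
move=> j _; rewrite IH; ring.
Qed.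

Definition term t q v i n := t ^ n / INR (Factorial.fact n) * matpowv q n v i.

Lemma ex_exp_abs (x : R) : ex_series (fun n => x ^ n / INR (Factorial.fact n)).
Proof.
have H := is_exp_Reals x. exists (exp x).
move: H; rewrite /is_pseries. apply is_series_ext => n.
rewrite pow_n_pow /scal /= /mult /=. rewrite /Rdiv; ring.
Qed.

Lemma ex_series_abs_term t q v i : ex_series (fun n => Rabs (term t q v i n)).
Proof.
apply: (ex_series_le _ (fun n => (Rabs t * Kn q) ^ n / INR (Factorial.fact n) * nrm v)).
  move=> n. rewrite /norm /= /abs /= Rabs_Rabsolu.
  rewrite /term !Rabs_mult Rabs_inv (Rabs_right (INR _)); last by apply Rle_ge, pos_INR.
  rewrite -RPow_abs Rpow_mult_distr /Rdiv.
  have H1 := matpowv_bound q n v i.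
  have H2 : 0 <= Rabs t ^ n * / INR (Factorial.fact n).
    apply Rmult_le_pos; [apply pow_le, Rabs_pos| apply Rlt_le, Rinv_0_lt_compat, lt_0_INR, Factorial.lt_O_fact].
  apply Rle_trans with (Rabs (matpowv q n v i) * (Rabs t ^ n * / INR (Factorial.fact n))); first (right; ring).
  eapply Rle_trans; [apply Rmult_le_compat_r; [exact H2| exact H1] | right; ring].
apply: ex_series_scal_r. apply ex_exp_abs.
Qed.

Lemma lim_seq_eq (s : nat -> R) l : Un_cv s l -> lim_seq s = l.
Proof.
move=> H. have Hs : Un_cv s (lim_seq s).
  rewrite /lim_seq. apply epsilon_spec. by exists l.
exact: UL_sequence Hs H.
Qed.

Lemma expmv_cv t q v i : Un_cv (fun N => sum_f_R0 (term t q v i) N) (expmv t q v i).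
Proof.
have [l Hl] : ex_series (term t q v i) by apply ex_series_Rabs, ex_series_abs_term.
have H : Un_cv (fun N => sum_f_R0 (term t q v i) N) l by apply is_series_Reals in Hl; exact Hl.
rewrite /expmv (lim_seq_eq _ _ H). exact H.
Qed.

Lemma expmv_is_series t q v i : is_series (term t q v i) (expmv t q v i).
Proof. apply is_series_Reals, expmv_cv. Qed.

Lemma expmv_of_cv t q v i l : Un_cv (fun N => sum_f_R0 (term t q v i) N) l -> expmv t q v i = l.
Proof. by move=> H; rewrite /expmv (lim_seq_eq _ _ H). Qed.

Lemma expmv_of_series t q v i l : is_series (term t q v i) l -> expmv t q v i = l.
Proof. move=> H. apply expmv_of_cv. by apply is_series_Reals. Qed.

Lemma expmv_lin t q a b u v i :
  expmv t q (fun j => a * u j + b * v j) i = a * expmv t q u i + b * expmv t q v i.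
Proof.
apply expmv_of_series.
have H := is_series_plus _ _ _ _ (is_series_scal_l a _ _ (expmv_is_series t q u i))
                                (is_series_scal_l b _ _ (expmv_is_series t q v i)).
move: H; apply is_series_ext => n.
rewrite /term matpowv_lin /plus /scal /= /mult /=. ring.
Qed.

Lemma cv_const (c : R) : Un_cv (fun _ => c) c.
Proof. move=> e He; exists O => n _; rewrite /R_dist Rminus_diag Rabs_R0; lra. Qed.

Lemma expmv_const t q c i : is_Qmatrix q -> expmv t q (fun _ => c) i = c.
Proof.
move=> Hq. apply expmv_of_cv.
have E : forall N, sum_f_R0 (term t q (fun _ => c) i) N = c.
  elim=> [|N IH]; first (rewrite /= /term matpowv_const //= /Rdiv Rinv_1; ring).
  rewrite tech5 IH /term matpowv_const //; ring.
move=> e He; exists O => n _; rewrite E /R_dist Rminus_diag Rabs_R0; lra.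
Qed.

Lemma expmv_t0 q v i : expmv 0 q v i = v i.
Proof.
apply expmv_of_cv.
have E : forall N, sum_f_R0 (term 0 q v i) N = v i.
  elim=> [|N IH]; first by rewrite /term /= /Rdiv Rinv_1 !Rmult_1_l.
  rewrite tech5 IH /term pow_ne_zero // /Rdiv !Rmult_0_l Rplus_0_r //.
move=> e He; exists O => n _; rewrite E /R_dist Rminus_diag Rabs_R0; lra.
Qed.

Lemma le_sum_term (F : 'I_d -> R) i : (forall j, 0 <= F j) -> F i <= \big[Rplus/0]_(j < d) F j.
Proof.
move=> H. rewrite (bigD1 i) //=.
rewrite -{1}[F i]Rplus_0_r; apply Rplus_le_compat_l.
elim/big_ind: _ => //; [lra | move=> *; lra].
Qed.

Definition Bm q : mat d := fun i j => q i j + (if i == j then Kn q else 0).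

Lemma Bm_mulmv q v i : mulmv (Bm q) v i = mulmv q v i + Kn q * v i.
Proof.
rewrite /mulmv /Bm (eq_bigr (fun j => q i j * v j + (if i == j then Kn q else 0) * v j)); last first.
  move=> j _; ring.
rewrite big_add. congr (_ + _).
rewrite (bigD1 i) //= eqxx big1 ?Rplus_0_r //.
move=> j Hj. rewrite eq_sym (negbTE Hj). ring.
Qed.

Lemma Bm_ge0 q i j : is_Qmatrix q -> 0 <= Bm q i j.
Proof.
move=> [H1 [H2 _]]. rewrite /Bm. case: eqP => [<-|Hne].
  have : Rabs (q i i) <= Kn q.
    apply Rle_trans with (\big[Rplus/0]_(j < d) Rabs (q i j)).
      by apply (le_sum_term (fun j => Rabs (q i j))) => ?; apply Rabs_pos.
    apply (le_sum_term (fun i => \big[Rplus/0]_(j < d) Rabs (q i j))) => k.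
    apply big_ge0 => ?; apply Rabs_pos.
  rewrite Rabs_left1; [lra | apply H1].
have := H2 i j Hne. lra.
Qed.

Lemma matpowv_ge0 (B : mat d) n w j : (forall i j, 0 <= B i j) -> (forall j, 0 <= w j) ->
  0 <= matpowv B n w j.
Proof.
move=> HB Hw. elim: n j => [|n IH] j //=.
apply big_ge0 => k. apply Rmult_le_pos; auto.
Qed.

Definition bsum (F : nat -> R) n := \big[Rplus/0]_(0 <= k < n.+1) F k.

Lemma bsum_sumf F n : bsum F n = sum_f_R0 F n.
Proof.
elim: n => [|n IH]; first by rewrite /bsum big_nat1.
by rewrite /bsum big_nat_recr // -/(bsum F n) IH tech5.
Qed.

Lemma mulmv_bsum q (a : nat -> R) (X : nat -> vec d) n i :
  mulmv q (fun j => bsum (fun k => a k * X k j) n) i = bsum (fun k => a k * mulmv q (X k) i) n.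
Proof.
elim: n => [|n IH].
  rewrite /bsum big_nat1 -mulmv_scal. rewrite /mulmv; apply eq_bigr => j _. by rewrite big_nat1.
rewrite /bsum big_nat_recr //= -/(bsum _ n) -IH -mulmv_scal -mulmv_add.
rewrite /mulmv; apply eq_bigr => j _. by rewrite /bsum big_nat_recr.
Qed.

Ltac set_printing := match goal with |- ?G => idtac "GOAL:" G end.
Lemma pascal_step (c : R) (T : nat -> R) n :
  \big[Rplus/0]_(0 <= k < n.+1) (INR 'C(n, k) * (- c) ^ (n - k) * (T k.+1 - c * T k)) =
  \big[Rplus/0]_(0 <= k < n.+2) (INR 'C(n.+1, k) * (- c) ^ (n.+1 - k) * T k).
Proof.
rewrite [RHS]big_nat_recl //.
rewrite (eq_big_nat _ _ (F2 := fun k => INR 'C(n, k) * (- c) ^ (n - k) * T k.+1 +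
     INR 'C(n, k) * (- c) ^ (n - k) * (- c) * T k)); last by move=> k _; ring.
rewrite big_split /=.
rewrite (eq_big_nat _ _ (F1 := fun k => INR 'C(n.+1, k.+1) * (- c) ^ (n.+1 - k.+1) * T k.+1)
   (F2 := fun k => INR 'C(n, k.+1) * (- c) ^ (n - k) * T k.+1 + INR 'C(n, k) * (- c) ^ (n - k) * T k.+1)); last first.
  move=> k _. rewrite binS -plusE plus_INR subSS. ring.
rewrite big_split /=.
have -> : \big[Rplus/0]_(0 <= k < n.+1) (INR 'C(n, k) * (- c) ^ (n - k) * (- c) * T k) =
  (- c) ^ n.+1 * T 0%nat + \big[Rplus/0]_(0 <= k < n.+1) (INR 'C(n, k.+1) * (- c) ^ (n - k) * T k.+1).
  rewrite big_nat_recl // big_nat_recr //=.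
  rewrite (bin_small (ltnSn n)) (bin0 n). rewrite subn0.
  rewrite (eq_big_nat _ _ (F1 := fun k => INR 'C(n, k.+1) * (- c) ^ (n - k.+1) * (- c) * T k.+1)
     (F2 := fun k => INR 'C(n, k.+1) * (- c) ^ (n - k) * T k.+1)); last first.
    move=> k /andP [_ Hk]. rewrite -(subnSK Hk) /=. ring.
  set S := \big[Rplus/0]_(0 <= i < n) _. rewrite /= Rmult_0_l Rmult_0_l Rplus_0_r. ring.
set S1 := \big[Rplus/0]_(0 <= i < n.+1) (INR 'C(n, i) * _ * _).
set S2 := \big[Rplus/0]_(0 <= i < n.+1) (INR 'C(n, i.+1) * _ * _).
rewrite /=. ring.
Qed.

Lemma binom_expand q n w i :
  matpowv q n w i =
  bsum (fun k => INR 'C(n, k) * (- Kn q) ^ (n - k) * matpowv (Bm q) k w i) n.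
Proof.
set c := Kn q. set T := fun k => matpowv (Bm q) k w.
elim: n i => [|n IH] i.
  by rewrite /bsum big_nat1 /= /T /= Rmult_1_l Rmult_1_l.
have E1 : matpowv q n.+1 w i =
  bsum (fun k => INR 'C(n, k) * (- c) ^ (n - k) * (T k.+1 i - c * T k i)) n.
  rewrite /= (_ : mulmv q (matpowv q n w) i =
     mulmv q (fun j => bsum (fun k => (INR 'C(n, k) * (- c) ^ (n - k)) * T k j) n) i); last first.
    rewrite /mulmv; apply eq_bigr => j _; rewrite IH; done.
  rewrite mulmv_bsum /bsum; apply eq_bigr => k _.
  rewrite /T /= Bm_mulmv /c; ring.
rewrite E1 /bsum. exact: (pascal_step c (fun k => T k i) n).
Qed.

Lemma cv_le (F G : nat -> R) l1 l2 : (forall n, F n <= G n) ->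
  Un_cv (fun N => sum_f_R0 F N) l1 -> Un_cv (fun N => sum_f_R0 G N) l2 -> l1 <= l2.
Proof.
move=> H H1 H2. apply: (Rle_cv_lim _ H1 H2) => n. apply sum_Rle => k _; apply H.
Qed.

Lemma fact_eq n : INR (Factorial.fact n) = INR (n`!).
Proof.
elim: n => [//|n IH]. rewrite factS -multE.
change (Factorial.fact n.+1) with (n.+1 * Factorial.fact n)%coq_nat.
by rewrite !mult_INR IH.
Qed.

Lemma fact_neq0 n : INR (Factorial.fact n) <> 0.
Proof. apply not_0_INR; have := Factorial.lt_O_fact n; lia. Qed.

Lemma expmv_ge0 t q w i : is_Qmatrix q -> 0 <= t -> (forall j, 0 <= w j) -> 0 <= expmv t q w i.
Proof.
move=> Hq Ht Hw.
set c := Kn q. set B := Bm q.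
have HB : forall i j, 0 <= B i j by move=> i0 j0; apply Bm_ge0.
set b := fun m => (- c * t) ^ m / INR (Factorial.fact m).
have Hb : is_series b (exp (- c * t)).
  move: (is_exp_Reals (- c * t)); rewrite /is_pseries; apply is_series_ext => n.
  rewrite pow_n_pow /scal /= /mult /= /b /Rdiv; ring.
have Hbabs : ex_series (fun n => Rabs (b n)).
  move: (ex_exp_abs (Rabs (- c * t))); apply ex_series_ext => n.
  rewrite /b /Rdiv [RHS]Rabs_mult -RPow_abs Rabs_inv (Rabs_right (INR _)) //; apply Rle_ge, pos_INR.
have Hm := is_series_mult _ _ _ _ (expmv_is_series t B w i) Hb (ex_series_abs_term t B w i) Hbabs.
have -> : expmv t q w i = expmv t B w i * exp (- c * t).
  apply expmv_of_series. move: Hm; apply is_series_ext => n.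
  rewrite /term binom_expand bsum_sumf scal_sum. apply PartSum.sum_eq => k Hk.
  have Hkn : (k <= n)%N by apply/leP.
  rewrite /b -/c -/B.
  have Hp : t ^ n = t ^ k * t ^ (n - k).
    rewrite -pow_add. congr (t ^ _). rewrite plusE. by rewrite subnKC.
  have Hf : INR (Factorial.fact n) = INR 'C(n, k) * INR (Factorial.fact k) * INR (Factorial.fact (n - k)).
    rewrite !fact_eq -!mult_INR !multE -mulnA. by rewrite bin_fact.
  have HC : INR 'C(n, k) <> 0.
    move=> H0. apply: (fact_neq0 n). rewrite Hf H0; ring.
  rewrite Hp Hf Rpow_mult_distr ?minusE. set X := matpowv B k w i. set m := (n - k)%N. field. split; [apply fact_neq0|split; [apply fact_neq0|exact HC]].
apply Rmult_le_pos; last by apply Rlt_le, exp_pos.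
apply: (cv_le (fun _ => 0) (term t B w i)).
- move=> n. rewrite /term. apply Rmult_le_pos; last by apply matpowv_ge0.
  apply Rmult_le_pos; [by apply pow_le | apply Rlt_le, Rinv_0_lt_compat, lt_0_INR, Factorial.lt_O_fact].
- move=> e He; exists O => n _. rewrite sum_cte Rmult_0_l /R_dist Rminus_diag Rabs_R0; lra.
- apply expmv_cv.
Qed.

Definition pcoef q v i n := matpowv q n v i / INR (Factorial.fact n).

Lemma expmv_PSeries q v i s : expmv s q v i = PSeries (pcoef q v i) s.
Proof.
symmetry; apply is_series_unique.
have E : forall n, term s q v i n = pcoef q v i n * s ^ n by move=> n; rewrite /term /pcoef /Rdiv; ring.
exact: (is_series_ext _ _ _ E (expmv_is_series s q v i)).
Qed.

Lemma expmv_cont q v i s : continuity_pt (fun s => expmv s q v i) s.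
Proof.
have -> : (fun s => expmv s q v i) = PSeries (pcoef q v i).
  apply functional_extensionality => x; apply expmv_PSeries.
apply PSeries_continuity.
apply Rbar_lt_le_trans with (Rbar.Finite (Rabs s + 1)); first by rewrite /=; lra.
case: (Lub_Rbar_correct (CV_disk (pcoef q v i))) => Hub _.
apply Hub. rewrite /CV_disk. move: (ex_series_abs_term (Rabs s + 1) q v i).
apply ex_series_ext => n. rewrite /term /pcoef /Rdiv. congr Rabs; ring.
Qed.

Lemma Rint_le0 (g : R -> R) h : 0 <= h -> (forall x, continuity_pt g x) ->
  (forall x, 0 <= x <= h -> g x <= 0) -> Rint g 0 h <= 0.
Proof.
move=> Hh Hc Hg.
have pr : Riemann_integrable g 0 h by apply continuity_implies_RiemannInt.
have -> : Rint g 0 h = RiemannInt pr.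
  have Hs : exists I, exists pr : Riemann_integrable g 0 h, RiemannInt pr = I by exists (RiemannInt pr); exists pr.
  have := epsilon_spec (inhabits 0) _ Hs. rewrite -/(Rint g 0 h). move=> [pr' <-]. apply RiemannInt_P5.
have pr0 : Riemann_integrable (fun _ => 0) 0 h.
  apply continuity_implies_RiemannInt => // x _; apply continuity_pt_const => a b //.
apply Rle_trans with (RiemannInt pr0).
  apply RiemannInt_P19 => // x Hx; apply Hg; lra.
rewrite RiemannInt_const; lra.
Qed.

Lemma Rint_00 (g : R -> R) : Rint g 0 0 = 0.
Proof.
have pr := RiemannInt_P7 g 0.
have Hs : exists I, exists pr : Riemann_integrable g 0 0, RiemannInt pr = I by exists (RiemannInt pr); exists pr.
have := epsilon_spec (inhabits 0) _ Hs. rewrite -/(Rint g 0 0). move=> [pr' <-]. apply RiemannInt_P9.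
Qed.

Lemma expmv_ext t q u v i : (forall j, u j = v j) -> expmv t q u i = expmv t q v i.
Proof. move=> H; have -> : u = v by apply functional_extensionality. done. Qed.

Variable f : mat d -> vec d.

Lemma Sq_0 q u i : Sq f q 0 u i = u i.
Proof. by rewrite /Sq expmv_t0 Rint_00 Rplus_0_r. Qed.

Lemma Sq_mono q h u v i : is_Qmatrix q -> 0 <= h -> (forall j, u j <= v j) ->
  Sq f q h u i <= Sq f q h v i.
Proof.
move=> Hq Hh Huv. rewrite /Sq.
have := expmv_ge0 h q (fun j => 1 * v j + (-1) * u j) i Hq Hh.
rewrite expmv_lin. move=> H. have := H (fun j => ltac:(have := Huv j; lra)). lra.
Qed.

Lemma Sq_trans q h u c i : is_Qmatrix q ->
  Sq f q h (fun j => u j + c) i = Sq f q h u i + c.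
Proof.
move=> Hq. rewrite /Sq.
rewrite (expmv_ext h q (fun j => u j + c) (fun j => 1 * u j + c * (fun _ => 1) j)); last by move=> j /=; ring.
rewrite expmv_lin expmv_const //. ring.
Qed.

Lemma Sq_zero q h i : is_Qmatrix q -> 0 <= h -> (forall j, f q j <= 0) ->
  Sq f q h (fun _ => 0) i <= 0.
Proof.
move=> Hq Hh Hf. rewrite /Sq expmv_const // Rplus_0_l.
apply Rint_le0 => // [x|x Hx]; first by apply expmv_cont.
have := expmv_ge0 x q (fun j => (-1) * f q j + 0 * f q j) i Hq (proj1 Hx).
rewrite expmv_lin. move=> H. have := H (fun j => ltac:(have := Hf j; lra)). lra.
Qed.
End Vec.

Lemma supR_lub (E : R -> Prop) : bound E -> (exists x, E x) -> is_lub E (supR E).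
Proof.
move=> Hb Hn. have [m Hm] := completeness E Hb Hn.
rewrite /supR. apply epsilon_spec. by exists m.
Qed.

Lemma le_eps (a y : R) : (forall e, 0 < e -> a - e <= y) -> a <= y.
Proof.
move=> H. apply Rnot_lt_le => Hlt. have := H ((a - y) / 2). lra.
Qed.

Section Main.
Variable d : nat.
Variable P : mat d -> Prop.
Variable f : mat d -> vec d.
Variable q0 : mat d.
Hypothesis HQ : forall q, P q -> is_Qmatrix q.
Hypothesis Hq0 : P q0.
Hypothesis Hfle : forall q j, P q -> f q j <= 0.

Lemma Sq_le_bound q h u i C : P q -> 0 <= h -> (forall j, u j <= C) -> Sq f q h u i <= C.
Proof.
move=> Pq Hh Hu.
apply Rle_trans with (Sq f q h (fun j => (fun _ => 0) j + C) i).
  apply Sq_mono => //; [by apply HQ | move=> j /=; have := Hu j; lra].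
rewrite Sq_trans; last by apply HQ.
have := Sq_zero _ f q h i (HQ q Pq) Hh (fun j => Hfle q j Pq). lra.
Qed.

Lemma Eh_lub h u i : 0 <= h -> is_lub (fun x => exists q, P q /\ x = Sq f q h u i) (Eh P f h u i).
Proof.
move=> Hh. apply supR_lub; last by exists (Sq f q0 h u i), q0.
exists (nrm _ u) => x [q [Pq ->]]. apply Sq_le_bound => // j.
apply Rle_trans with (Rabs (u j)); [apply Rle_abs | apply le_nrm].
Qed.

Lemma Eh_ge h u i q : P q -> 0 <= h -> Sq f q h u i <= Eh P f h u i.
Proof. move=> Pq Hh. case: (Eh_lub h u i Hh) => H _. apply H. by exists q. Qed.

Lemma Eh_le h u i C : 0 <= h -> (forall q, P q -> Sq f q h u i <= C) -> Eh P f h u i <= C.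
Proof. move=> Hh H. case: (Eh_lub h u i Hh) => _ H2. apply H2 => x [q [Pq ->]]. by apply H. Qed.

Lemma Eh_mono h u v i : 0 <= h -> (forall j, u j <= v j) -> Eh P f h u i <= Eh P f h v i.
Proof.
move=> Hh Huv. apply Eh_le => // q Pq. apply Rle_trans with (Sq f q h v i).
  apply Sq_mono => //; by apply HQ.
by apply Eh_ge.
Qed.

Lemma Eh_0 u i : Eh P f 0 u i = u i.
Proof.
apply Rle_antisym.
  apply Eh_le; first lra. move=> q _; rewrite Sq_0; lra.
rewrite -{1}(Sq_0 _ f q0 u i). apply Eh_ge => //; lra.
Qed.

Lemma Eh_bound h u i C : 0 <= h -> (forall j, u j <= C) -> Eh P f h u i <= C.
Proof. move=> Hh Hu. apply Eh_le => // q Pq. by apply Sq_le_bound. Qed.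

Lemma incr_le a ts t : incr_from a ts t -> a <= t.
Proof.
elim: ts a => [|x r IH] a /=; first lra.
move=> [Hax Hr]. have := IH x Hr. lra.
Qed.

Lemma Epi_aux_bound u0 C : (forall j, u0 j <= C) ->
  forall ts a t, incr_from a ts t -> forall i, Epi_aux P f a ts u0 i <= C.
Proof.
move=> Hu. elim=> [|x r IH] a t /=; first by move=> _ i; apply Hu.
move=> [Hax Hr] i. apply Eh_bound; first lra. move=> j; exact: IH x t Hr j.
Qed.

Lemma approx u0 t : forall ts a, 0 <= a -> incr_from a ts t -> forall e, 0 < e ->
  exists th, all_in P t th /\ sum_h th = t - a /\ (ts <> nil -> th <> nil) /\
    forall i, Epi_aux P f a ts u0 i - e <= Stheta f th u0 i.
Proof.
elim=> [|x r IH] a Ha Hincr e He.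
  exists nil. rewrite /= in Hincr *. split => //. split; first lra. split => // i; lra.
move: Hincr => /= [Hax Hr].
have Hxt := incr_le x r t Hr.
have [thr [Hall [Hsum [_ Happ]]]] := IH x ltac:(lra) Hr (e / 2) ltac:(lra).
set w := Epi_aux P f x r u0. set h := x - a.
have Hh : 0 <= h by rewrite /h; lra.
have Hex : forall i, exists q, P q /\ Eh P f h w i - e / 2 < Sq f q h w i.
  move=> i. apply NNPP => Hno.
  have : Eh P f h w i <= Eh P f h w i - e / 2.
    apply Eh_le => // q Pq. apply Rnot_lt_le => Hlt. apply Hno. by exists q.
  lra.
pose qs := fun i => epsilon (inhabits q0) (fun q => P q /\ Eh P f h w i - e / 2 < Sq f q h w i).
have Hqs : forall i, P (qs i) /\ Eh P f h w i - e / 2 < Sq f (qs i) h w i.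
  move=> i. exact: (epsilon_spec (inhabits q0) _ (Hex i)).
exists (cons (qs, h) thr). split.
  split; first by move=> i; case: (Hqs i).
  split => //. split => //. rewrite /h; lra.
split; first by rewrite /= Hsum /h; ring.
split => // i. rewrite /=. rewrite /Sbold -/h -/w.
case: (Hqs i) => Pq Hlt.
apply Rle_trans with (Sq f (qs i) h (fun j => w j + - (e / 2)) i).
  rewrite Sq_trans; [lra | by apply HQ].
apply Sq_mono; [by apply HQ | done | move=> j; have := Happ j; rewrite -/w; lra].
Qed.

Lemma dominate u0 T : forall th a, all_in P T th ->
  exists ts, incr_from a ts (a + sum_h th) /\ forall i, Stheta f th u0 i <= Epi_aux P f a ts u0 i.
Proof.
elim=> [|[qs h] r IH] a /=.
  move=> _; exists nil; split; [by rewrite /= Rplus_0_r | move=> i /=; lra].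
move=> [Hqs [[Hh0 _] Hr]].
have [tsr [Hinc Hle]] := IH (a + h) Hr.
case: (Rle_lt_or_eq_dec 0 h Hh0) => Hh.
  exists (cons (a + h) tsr). split.
    rewrite /=. split; first lra. by rewrite -Rplus_assoc.
  move=> i /=. rewrite /Sbold.
  replace (a + h - a) with h by ring.
  apply Rle_trans with (Sq f (qs i) h (Epi_aux P f (a + h) tsr u0) i).
    apply Sq_mono => //; by apply HQ.
  by apply Eh_ge.
subst h. exists tsr. rewrite Rplus_0_r in Hinc Hle. split.
  by rewrite Rplus_0_l.
move=> i /=. rewrite /Sbold Sq_0. apply Hle.
Qed.

End Main.

Theorem mainTheorem15 (d : nat) (P : mat d -> Prop) (f : mat d -> vec d) (q0 : mat d)
  (HQ : forall q, P q -> is_Qmatrix q)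
  (Hq0 : P q0)
  (Hf0 : forall i, f q0 i = 0)
  (Hsup : forall i, is_lub (fun x => exists q, P q /\ x = f q i) 0)
  (Hfin : forall (u : vec d) i, bound (fun x => exists q, P q /\ x = mulmv q u i + f q i))
  (t : R) (u0 : vec d) (ht : 0 <= t) :
  forall i,
    is_lub (fun x => exists ts, in_Pt t ts /\ x = Epi P f ts u0 i) (nisio P f t u0 i) /\
    is_lub (fun x => exists th, in_Qt P t th /\ x = Stheta f th u0 i) (nisio P f t u0 i).
Proof.
move=> i.
have Hfle : forall q j, P q -> f q j <= 0.
  move=> q j Pq. case: (Hsup j) => H _. apply H. by exists q.
have HC : forall j, u0 j <= nrm _ u0.
  move=> j; apply Rle_trans with (Rabs (u0 j)); [apply Rle_abs | apply le_nrm].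
have HEpi : forall ts, in_Pt t ts -> Epi P f ts u0 i = Epi_aux P f 0 ts u0 i.
  case=> [|x r] //= _. by rewrite (Eh_0 _ P f q0 HQ Hq0 Hfle).
have HA : is_lub (fun x => exists ts, in_Pt t ts /\ x = Epi P f ts u0 i) (nisio P f t u0 i).
  apply supR_lub.
    exists (nrm _ u0) => x [ts [Hts ->]]. rewrite (HEpi ts Hts).
    exact: (Epi_aux_bound _ P f q0 HQ Hq0 Hfle u0 _ HC ts 0 t Hts i).
  case: (Rle_lt_or_eq_dec 0 t ht) => Ht.
    exists (Epi P f (cons t nil) u0 i), (cons t nil). split; [by split | done].
  exists (Epi P f nil u0 i), nil. split; [exact Ht | done].
split => //.
split.
  move=> x [th [[Hne [Hall Hsum]] ->]].
  have [ts [Hinc Hle]] := dominate _ P f q0 HQ Hq0 Hfle u0 t th 0 Hall.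
  rewrite Hsum Rplus_0_l in Hinc.
  apply Rle_trans with (Epi P f ts u0 i).
    rewrite (HEpi ts Hinc). apply Hle.
  case: HA => H _. apply H. by exists ts.
move=> y Hy. case: HA => _ H. apply H => x [ts [Hts ->]].
apply le_eps => e He.
case: ts Hts => [|x0 r] Hts.
  have Ht0 : 0 = t by exact Hts.
  set th := cons (fun _ : 'I_d => q0, 0) nil.
  apply Rle_trans with (Stheta f th u0 i).
    rewrite /th /= /Sbold Sq_0 (Eh_0 _ P f q0 HQ Hq0 Hfle). lra.
  apply Hy. exists th. split => //.
  split; first by rewrite /th.
  split; last by rewrite /th /= -Ht0; ring.
  rewrite /th /= -Ht0. split => //. split; [lra|done].
have [th [Hall [Hsum [Hne Happ]]]] := approx _ P f q0 HQ Hq0 Hfle u0 t (cons x0 r) 0 ltac:(lra) Hts e He.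
apply Rle_trans with (Stheta f th u0 i); first by rewrite (HEpi _ Hts); apply Happ.
apply Hy. exists th. split => //. split; first by apply Hne.
split => //. rewrite Hsum; ring.
Qed.
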